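(* Let $K\subset\mathbb{R}^k$ be a convex body symmetric about the origin and let $E(K)$ be the maximum volume ellipsoid contained in $K$. For a vector $\bm{u}$ on the boundary of $E(K)$, let $K'=\mathrm{conv}(K,2\sqrt{k}\bm{u},-2\sqrt{k}\bm{u})$. Then $\frac{\mathrm{vol}(E(K'))}{\mathrm{vol}(E(K))}\ge\frac{13}{10}$.
   Context: $\mathrm{conv}$ denotes convex hull, $\mathrm{vol}$ the $k$-dimensional volume, and $E(\cdot)$ the maximum-volume ellipsoid contained in a convex body. *)

(* Defs.v *)
From HB Require Import structures.
From mathcomp Require Import all_boot all_order all_algebra.
From mathcomp Require Import all_classical all_reals all_analysis.
Set Implicit Arguments. Unset Strict Implicit. Unset Printing Implicit Defensive.
Import Order.TTheory GRing.Theory Num.Theory numFieldNormedType.Exports.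
Local Open Scope classical_set_scope.
Local Open Scope ring_scope.

Definition sqnorm (R : realType) (k : nat) (x : 'cV[R]_k) : R :=
  \sum_(i < k) x i 0 ^+ 2.

Definition convex_set (R : realType) (k : nat) (C : set 'cV[R]_k) : Prop :=
  forall x y (t : R), C x -> C y -> 0 <= t -> t <= 1 ->
    C (t *: x + (1 - t) *: y).

Definition conv_hull (R : realType) (k : nat) (S : set 'cV[R]_k) : set 'cV[R]_k :=
  [set x | forall C, convex_set C -> S `<=` C -> C x].

Definition convex_body (R : realType) (k : nat) (K : set 'cV[R]_k) : Prop :=
  convex_set K /\ compact K /\ (interior K !=set0).

Definition origin_symmetric (R : realType) (k : nat) (K : set 'cV[R]_k) : Prop :=
  forall x, K x -> K (- x).

Definition ellipsoid (R : realType) (k : nat) (c : 'cV[R]_k) (A : 'M[R]_k)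
  : set 'cV[R]_k := [set c + A *m x | x in [set x | sqnorm x <= 1]].

Definition ellipsoid_boundary (R : realType) (k : nat) (c : 'cV[R]_k)
  (A : 'M[R]_k) : set 'cV[R]_k := [set c + A *m x | x in [set x | sqnorm x = 1]].

(* Volume of the ellipsoid (c, A), up to the constant factor vol(unit ball)
   which is common to all ellipsoids in R^k:  vol = vol(B^k) * |det A|. *)
Definition ellipsoid_vol_ratio (R : realType) (k : nat) (A : 'M[R]_k) : R :=
  `|\det A|.

Definition is_max_vol_ellipsoid (R : realType) (k : nat) (K : set 'cV[R]_k)
  (c : 'cV[R]_k) (A : 'M[R]_k) : Prop :=
  A \in unitmx /\ ellipsoid c A `<=` K /\
  (forall c' A', A' \in unitmx -> ellipsoid c' A' `<=` K ->
     ellipsoid_vol_ratio A' <= ellipsoid_vol_ratio A).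

(* Main.v *)
Require Import Defs.
From HB Require Import structures.
From mathcomp Require Import all_boot all_order all_algebra.
From mathcomp Require Import all_classical all_reals all_analysis.
From mathcomp Require Import ring lra.
Import Order.TTheory GRing.Theory Num.Theory numFieldNormedType.Exports.
Local Open Scope classical_set_scope.
Local Open Scope ring_scope.
Lemma det_rank1 (R : comUnitRingType) n (p : 'cV[R]_n) (q : 'rV[R]_n) :
  \det (1%:M + p *m q) = 1 + (q *m p) 0 0.
Proof.
have E1 : block_mx 1%:M (-p) q 1%:M =
  block_mx 1%:M 0 q 1%:M *m block_mx 1%:M (-p) 0 (1%:M + q *m p).
  rewrite mulmx_block !mul1mx !mul0mx ?mulmx1 ?mulmx0 ?addr0 ?add0r.
  by rewrite mulmxN [1%:M + _]addrC addKr.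
have E2 : block_mx 1%:M (-p) q 1%:M =
  block_mx 1%:M (-p) 0 1%:M *m block_mx (1%:M + p *m q) 0 q 1%:M.
  rewrite mulmx_block !mul1mx !mul0mx ?mulmx1 ?mulmx0 ?addr0 ?add0r.
  by rewrite mulNmx addrK.
have := congr1 determinant E1; rewrite E2 !det_mulmx det_lblock det_ublock.
rewrite det_ublock det_lblock !det1 !mul1r !mulr1 det_mx11 !mxE /= => ->.
by [].
Qed.
Lemma det_r1 (R : fieldType) n (b c : R) (p : 'cV[R]_n.+1) :
  \det (b%:M + c *: (p *m p^T)) = b ^+ n * (b + c * (p^T *m p) 0 0).
Proof.
have [->|b0] := eqVneq b 0.
  case: n p => [|n] p.
    by rewrite expr0 mul1r det_mx11 !mxE !big_ord1 !mxE /= mul0rn.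
  have -> : (0 : R)%:M = 0 :> 'M[R]_(n.+2) by apply/matrixP => i j; rewrite !mxE mul0rn.
  rewrite add0r detZ expr0n /= mul0r.
  suff -> : \det (p *m p^T) = 0 by rewrite mulr0.
  apply/eqP; apply: contraT => H.
  have : (p *m p^T) \in unitmx by rewrite unitmxE unitfE.
  rewrite -row_free_unit /row_free => /eqP H2.
  have := mxrankM_maxr p p^T; rewrite H2 => H3.
  have := rank_leq_row p^T; move: H3; rewrite /=.
  move=> H3 H4; have := leq_trans H3 H4; done.
have -> : b%:M + c *: (p *m p^T) = b *: (1%:M + (c / b *: p) *m p^T).
  rewrite scalerDr scalemx1 -scalemxAl scalerA mulrC divfK //.
rewrite detZ det_rank1 -scalemxAr mxE exprSr -mulrA; congr (_ * _).
by field.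
Qed.
Definition dot {R : realType} {k} (p q : 'cV[R]_k) : R := \sum_(i < k) p i 0 * q i 0.

Lemma sqnormDZ {R : realType} {k} (a b : R) (p q : 'cV[R]_k) :
  sqnorm (a *: p + b *: q) =
  a ^+ 2 * sqnorm p + 2 * a * b * dot p q + b ^+ 2 * sqnorm q.
Proof.
rewrite /sqnorm /dot !mulr_sumr -!big_split /=; apply: eq_bigr => i _.
rewrite !mxE; ring.
Qed.

Lemma sqnorm_ge0 {R : realType} {k} (p : 'cV[R]_k) : 0 <= sqnorm p.
Proof. by rewrite /sqnorm; apply: sumr_ge0 => i _; rewrite sqr_ge0. Qed.

Lemma sqnorm_eq0 {R : realType} {k} (p : 'cV[R]_k) : sqnorm p = 0 -> p = 0.
Proof.
move=> /eqP; rewrite /sqnorm psumr_eq0; last by move=> i _; rewrite sqr_ge0.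
move=> /allP H; apply/matrixP => i j; rewrite ord1 mxE.
have := H i (mem_index_enum i); rewrite sqrf_eq0 => /eqP; done.
Qed.

Lemma dotC {R : realType} {k} (p q : 'cV[R]_k) : dot p q = dot q p.
Proof. by apply: eq_bigr => i _; rewrite mulrC. Qed.

Lemma dotpp {R : realType} {k} (p : 'cV[R]_k) : dot p p = sqnorm p.
Proof. by apply: eq_bigr => i _; rewrite expr2. Qed.

Lemma mul_col_scalar {R : realType} {k} (p : 'cV[R]_k) (m : 'M[R]_1) :
  p *m m = m 0 0 *: p.
Proof.
apply/matrixP => i j; rewrite ord1 !mxE big_ord1 mulrC; done.
Qed.

Lemma tr_mul_dot {R : realType} {k} (p q : 'cV[R]_k) : (p^T *m q) 0 0 = dot p q.
Proof. by rewrite mxE; apply: eq_bigr => i _; rewrite mxE. Qed.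
Lemma pow_bound (R : realType) (n : nat) :
  169 / 400 <= (4 * n%:R / (4 * n%:R + 3) : R) ^+ n.
Proof.
case: n => [|m]; first by rewrite expr0; lra.
set n := m.+1.
have n0 : (0 : R) < n%:R by rewrite ltr0n.
set x : R := 3 / (4 * n%:R).
have hx : 0 <= x by rewrite /x; apply: divr_ge0; lra.
have e1 : (1 + x) ^+ n <= expR x ^+ n.
  apply: lerXn2r; rewrite ?nnegrE; [lra | exact: expR_ge0 | exact: expR_ge1Dx].
have e2 : expR x ^+ n = expR (3/4).
  by rewrite -expRM_natl /x; congr expR; field; lra.
have e3 : expR (-(3/4)) = expR (-(3/16)) ^+ 4 :> R.
  by rewrite -expRM_natl; congr expR; field.
have e4 : (13/16 : R) ^+ 4 <= expR (-(3/16)) ^+ 4.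
  apply: lerXn2r; rewrite ?nnegrE; [lra | exact: expR_ge0 | ].
  have := expR_ge1Dx (-(3/16) : R); lra.
have e5 : expR (3/4) * expR (-(3/4)) = 1 :> R by rewrite -expRD subrr expR0.
set s := 4 * n%:R / (4 * n%:R + 3).
have s0 : 0 <= s by rewrite /s; apply: divr_ge0; lra.
have e6 : s * (1 + x) = 1 by rewrite /s /x; field; lra.
have e7 : s ^+ n * (1 + x) ^+ n = 1 by rewrite -exprMn e6 expr1n.
have sn0 : 0 <= s ^+ n by exact: exprn_ge0.
have ep : 0 < expR (3/4 : R) by exact: expR_gt0.
rewrite e2 in e1.
have e8 := ler_wpM2l sn0 e1; rewrite e7 in e8.
have e9 : expR (-(3/4)) <= s ^+ n.
  have f0 : 0 < expR (-(3/4) : R) by exact: expR_gt0.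
  nra.
rewrite e3 in e9.
apply: le_trans e9; apply: le_trans e4; lra.
Qed.
Lemma oned (R : realType) (r b s Y : R) : 1 <= r -> 0 <= b ->
  b ^+ 2 = (4 * r ^+ 2 - 4) / (4 * r ^+ 2 - 1) -> 0 <= s -> s ^+ 2 <= Y -> Y <= 1 ->
  exists l, 0 <= l /\ l <= 1 /\
   b ^+ 2 * Y + 2 * b * ((2 - b) * s - 2 * r * l) * s + ((2 - b) * s - 2 * r * l) ^+ 2
     <= (1 - l) ^+ 2.
Proof.
move=> r1 b0 hb s0 sY Y1.
have D0 : 0 < 4 * r ^+ 2 - 1 by nra.
have s1 : s <= 1 by nra.
have hb' : b ^+ 2 * (4 * r ^+ 2 - 1) = 4 * r ^+ 2 - 4.
  by rewrite hb mulrVK // unitfE; lra.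
have E : forall l, b ^+ 2 * Y + 2 * b * ((2 - b) * s - 2 * r * l) * s
   + ((2 - b) * s - 2 * r * l) ^+ 2 = b ^+ 2 * (Y - s ^+ 2) + (2 * s - 2 * r * l) ^+ 2.
  by move=> l; ring.
have bY : b ^+ 2 * (Y - s ^+ 2) <= b ^+ 2 * (1 - s ^+ 2).
  apply: ler_wpM2l; [exact: sqr_ge0 | lra].
case: (lerP (4 * r * s) 1) => hrs.
  exists 0; split; first lra; split; first lra.
  rewrite E; apply: le_trans (lerD bY (lexx _)) _.
  have : b ^+ 2 * (4 * r ^+ 2 - 1) * (1 - s ^+ 2) + 4 * s ^+ 2 * (4 * r ^+ 2 - 1)
      <= 4 * r ^+ 2 - 1.
    have rs0 : 0 <= r * s by nra.
    have h1 : (r * s) ^+ 2 <= 1 / 16 by nra.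
    rewrite hb'; nra.
  move=> H; rewrite subr0 expr1n.
  have H2 : (b ^+ 2 * (1 - s ^+ 2) + 4 * s ^+ 2) * (4 * r ^+ 2 - 1) <= 1 * (4 * r ^+ 2 - 1).
    lra.
  rewrite ler_pM2r // in H2.
  have -> : (2 * s - 2 * r * 0) ^+ 2 = 4 * s ^+ 2 by ring.
  done.
set l := (4 * r * s - 1) / (4 * r ^+ 2 - 1).
have Dl : l * (4 * r ^+ 2 - 1) = 4 * r * s - 1 by rewrite /l mulrVK // unitfE; lra.
exists l; split.
  by rewrite /l; apply: divr_ge0; lra.
split.
  rewrite /l ler_pdivrMr //; nra.
rewrite E; apply: le_trans (lerD bY (lexx _)) _.
have key : ((1 - l) ^+ 2 - (b ^+ 2 * (1 - s ^+ 2) + (2 * s - 2 * r * l) ^+ 2))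
   * (4 * r ^+ 2 - 1) ^+ 2 = 4 * (4 * r ^+ 2 - 1) * (1 - r * s) ^+ 2.
  rewrite /l hb; field; lra.
have : 0 <= ((1 - l) ^+ 2 - (b ^+ 2 * (1 - s ^+ 2) + (2 * s - 2 * r * l) ^+ 2))
   * (4 * r ^+ 2 - 1) ^+ 2.
  rewrite key; apply: mulr_ge0; [lra | exact: sqr_ge0].
rewrite pmulr_lge0 ?exprn_gt0 //; lra.
Qed.

Lemma sqnormZ {R : realType} {k} (a : R) (p : 'cV[R]_k) :
  sqnorm (a *: p) = a ^+ 2 * sqnorm p.
Proof. rewrite /sqnorm mulr_sumr; apply: eq_bigr => i _; rewrite !mxE; ring. Qed.

Lemma sqnormN {R : realType} {k} (p : 'cV[R]_k) : sqnorm (- p) = sqnorm p.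
Proof. by rewrite -scaleN1r sqnormZ sqrrN expr1n mul1r. Qed.

Ltac clr := repeat match goal with H : @eq (matrix _ _ _) _ _ |- _ => clear H end.

Lemma c_zero (R : realType) (k : nat) (K : set 'cV[R]_k)
  (c : 'cV[R]_k) (A : 'M[R]_k) :
  Defs.convex_set K -> origin_symmetric K -> is_max_vol_ellipsoid K c A -> c = 0.
Proof.
move=> Kconv Ksym [Aunit [EK Amax]].
have hK : forall x, sqnorm x <= 1 -> K (c + A *m x).
  by move=> x hx; apply: EK; exists x.
set dv := invmx A *m c.
have Ad : A *m dv = c by rewrite /dv mulKVmx.
set mu := (1 + sqnorm dv)^-1.
have d0 := sqnorm_ge0 dv.
have mu0 : 0 < mu by rewrite /mu invr_gt0; (clr; lra).
have muD : mu * (1 + sqnorm dv) = 1.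
  rewrite /mu mulVf //. clear Ad. (clr; lra).
set N := 1%:M + (mu *: dv) *m dv^T.
have detN : \det N = 1 + mu * sqnorm dv.
  by rewrite det_rank1 -scalemxAr mxE tr_mul_dot dotpp.
have sub : ellipsoid 0 (A *m N) `<=` K.
  move=> z [y /= hy <-].
  set t := mu * dot dv y.
  have h1 := sqnorm_ge0 (1 *: dv + 1 *: y).
  have h2 := sqnorm_ge0 (1 *: dv + (-1) *: y).
  rewrite !sqnormDZ in h1 h2.
  have ht : t * (1 + sqnorm dv) = dot dv y by rewrite /t mulrAC muD mul1r.
  have ht1 : -1 <= t <= 1 by apply/andP; split; (clr; nra).
  case/andP: ht1 => ht1 ht2.
  have -> : 0 + A *m N *m y =
     ((1 + t) / 2) *: (c + A *m y) + (1 - (1 + t) / 2) *: (- (c + A *m (- y))).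
    rewrite add0r -mulmxA mulmxDl mul1mx -mulmxA mul_col_scalar tr_mul_dot.
    rewrite mulmxDr -!scalemxAr Ad mulmxN opprD opprK.
    apply/matrixP => i j; rewrite !mxE /t.
    move: (dot dv y) (\sum_j0 A i j0 * y j0 j) (c i j) => X Y Z; clear.
    by field.
  apply: Kconv; [exact: hK | | (clr; lra) | (clr; lra)].
  by apply: Ksym; apply: hK; rewrite sqnormN.
have dA : \det A != 0 by rewrite -unitfE -unitmxE.
have Nunit : A *m N \in unitmx.
  rewrite unitmxE det_mulmx unitfE mulf_neq0 // detN.
  have : 0 <= mu * sqnorm dv by apply: mulr_ge0; (clr; lra).
  by move=> H; apply/eqP => H2; (clr; lra).
have := Amax 0 (A *m N) Nunit sub.
rewrite /ellipsoid_vol_ratio det_mulmx normrM detN.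
have nA : 0 < `|\det A| by rewrite normr_gt0.
have md : 0 <= mu * sqnorm dv by apply: mulr_ge0; (clr; lra).
rewrite [`|1 + _|]ger0_norm; last (clr; lra).
move=> H.
have md0 : mu * sqnorm dv <= 0 by (clr; nra).
have sd : sqnorm dv = 0 by (clr; nra).
by rewrite -Ad (sqnorm_eq0 dv sd) mulmx0.
Qed.

Theorem lemma4 (R : realType) (k : nat) (K : set 'cV[R]_k)
  (c : 'cV[R]_k) (A : 'M[R]_k) (u : 'cV[R]_k)
  (c' : 'cV[R]_k) (A' : 'M[R]_k) :
  convex_body K -> origin_symmetric K ->
  is_max_vol_ellipsoid K c A ->
  ellipsoid_boundary c A u ->
  is_max_vol_ellipsoid
    (conv_hull (K `|` [set (2 * Num.sqrt (k%:R)) *: u;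
                          - ((2 * Num.sqrt (k%:R)) *: u)])) c' A' ->
  ellipsoid_vol_ratio A' / ellipsoid_vol_ratio A >= 13 / 10.
Proof.
move=> [Kconv _] Ksym HA [x0 /= hx0 hu] [A'unit [_ A'max]].
have c0 := @c_zero R k K c A Kconv Ksym HA.
case: HA => [Aunit [EK _]].
subst c; rewrite add0r in hu; subst u.
have hK : forall x, sqnorm x <= 1 -> K (A *m x).
  by move=> x hx; rewrite -[A *m x]add0r; apply: EK; exists x.
case: k K A x0 c' A' Kconv Ksym hx0 A'unit A'max Aunit EK hK =>
  [|n] K A x0 c' A' Kconv Ksym hx0 A'unit A'max Aunit EK hK.
  by move: hx0; rewrite /sqnorm big_ord0 => /esym/eqP; rewrite oner_eq0.
set r := Num.sqrt (n.+1%:R : R).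
have r0 : 0 <= r by exact: sqrtr_ge0.
have r2 : r ^+ 2 = n.+1%:R by rewrite sqr_sqrtr // ler0n.
have r1 : 1 <= r.
  have : (1 : R) <= n.+1%:R by rewrite ler1n.
  by rewrite -r2 => H; nra.
set b := Num.sqrt ((4 * r ^+ 2 - 4) / (4 * r ^+ 2 - 1)).
have b0 : 0 <= b by exact: sqrtr_ge0.
have hb : b ^+ 2 = (4 * r ^+ 2 - 4) / (4 * r ^+ 2 - 1).
  rewrite sqr_sqrtr //; apply: divr_ge0; nra.
set M := b%:M + (2 - b) *: (x0 *m x0^T).
have detM : \det M = b ^+ n * 2.
  rewrite /M det_r1 tr_mul_dot dotpp hx0; congr (_ * _); ring.
have bn : 13 / 20 <= b ^+ n.
  have := pow_bound R n.
  have -> : 4 * n%:R / (4 * n%:R + 3) = b ^+ 2 :> R.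
    by rewrite hb r2 -natr1; congr (_ / _); ring.
  rewrite -exprM mulnC exprM => H.
  have := exprn_ge0 n b0; nra.
have conv : forall (w : 'cV[R]_n.+1) (sg l : R), (sg = 1 \/ sg = -1) -> 0 <= l -> l <= 1 ->
  sqnorm (w - (l * sg * (2 * r)) *: x0) <= (1 - l) ^+ 2 ->
  conv_hull (K `|` [set (2 * r) *: (A *m x0); - ((2 * r) *: (A *m x0))]) (A *m w).
  move=> w sg l hsg l0 l1 hw C Cconv SC.
  have hq : C (A *m ((sg * (2 * r)) *: x0)).
    apply: SC; right; rewrite -scalemxAr.
    by case: hsg => ->; [left; rewrite mul1r | right; rewrite mulN1r scaleNr].
  have hK' : forall x, sqnorm x <= 1 -> C (A *m x).
    by move=> x hx; apply: SC; left; exact: hK.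
  have [l1e|l1'] := eqVneq l 1.
    move: hw; rewrite l1e subrr expr0n /= mul1r => hw.
    have e : sqnorm (w - (sg * (2 * r)) *: x0) = 0.
      by apply/eqP; rewrite eq_le hw sqnorm_ge0.
    by move/eqP: (sqnorm_eq0 _ e); rewrite subr_eq0 => /eqP ->.
  have ll : l < 1 by rewrite lt_neqAle l1' l1.
  set w' := (1 - l)^-1 *: (w - (l * sg * (2 * r)) *: x0).
  have hw' : sqnorm w' <= 1.
    rewrite /w' sqnormZ exprVn mulrC ler_pdivrMr ?exprn_gt0 ?mul1r //; (clr; lra).
  have := Cconv _ _ l hq (hK' _ hw') l0 l1.
  have -> : l *: (A *m ((sg * (2 * r)) *: x0)) + (1 - l) *: (A *m w') = A *m w.
    rewrite /w' -!scalemxAr !scalerA mulfV; last by (clr; lra).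
    by rewrite scale1r mulmxBr scalemxAr mulrA addrC subrK.
  done.
have sub : ellipsoid 0 (A *m M) `<=`
    conv_hull (K `|` [set (2 * r) *: (A *m x0); - ((2 * r) *: (A *m x0))]).
  move=> z [y /= hy <-]; rewrite add0r -mulmxA.
  set s := dot y x0.
  have sY : s ^+ 2 <= sqnorm y.
    have := sqnorm_ge0 (1 *: y + (- s) *: x0); rewrite sqnormDZ hx0 -/s.
    by move=> H; (clr; nra).
  have My : M *m y = b *: y + ((2 - b) * s) *: x0.
    rewrite /M mulmxDl mul_scalar_mx -scalemxAl -mulmxA mul_col_scalar.
    by rewrite tr_mul_dot dotC scalerA.
  have key : forall sg l, sqnorm (M *m y - (l * sg * (2 * r)) *: x0) =
      b ^+ 2 * sqnorm y + 2 * b * ((2 - b) * s - l * sg * (2 * r)) * s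
      + ((2 - b) * s - l * sg * (2 * r)) ^+ 2.
    move=> sg l; rewrite My -addrA -scalerBl sqnormDZ hx0 -/s; ring.
  case: (lerP 0 s) => hs.
    have [l [l0 [l1 H]]] := @oned R r b s (sqnorm y) r1 b0 hb hs sY hy.
    apply: (conv _ 1 l) => //; first by left.
    rewrite key; (clr; lra).
  have hs' : 0 <= - s by (clr; lra).
  have sY' : (- s) ^+ 2 <= sqnorm y by rewrite sqrrN.
  have [l [l0 [l1 H]]] := @oned R r b (- s) (sqnorm y) r1 b0 hb hs' sY' hy.
  apply: (conv _ (-1) l) => //; first by right.
  rewrite key; (clr; lra).
have dA : \det A != 0 by rewrite -unitfE -unitmxE.
have Munit : A *m M \in unitmx.
  rewrite unitmxE det_mulmx unitfE mulf_neq0 // detM.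
  by apply/eqP => H; (clr; nra).
have := A'max 0 (A *m M) Munit sub.
rewrite /ellipsoid_vol_ratio det_mulmx normrM detM [`|b ^+ n * 2|]ger0_norm; last first.
  by apply: mulr_ge0; [exact: exprn_ge0 | (clr; lra)].
have nA : 0 < `|\det A| by rewrite normr_gt0.
move=> H; rewrite ler_pdivlMr //; (clr; nra).
Qed.
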